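(* Let $T$ be a finite tree in which every vertex has degree one (a leaf) or degree three (an internal node), with vertex set $V(T)$, leaf set $L(T)$ and edge set $E(T)$. There exist nonnegative real numbers $\lambda_{vx}$ ($v\in V(T)$, $x\in L(T)$), depending only on $T$, with $\lambda_{xx}=1$ for all $x\in L(T)$, such that the following holds for every inner product $\langle\cdot,\cdot\rangle$ on $\mathrm{span}(\mathcal{H})$ and every map $\chi:L(T)\to\mathcal{K}_n$: among all extensions $\widehat{\chi}$ of $\chi$, there is a unique one of minimum length $\ell(\widehat{\chi})$, and it satisfies $\widehat{\chi}(v)=\sum_{x\in L(T)}\lambda_{vx}\chi(x)$ (Minkowski combination) for every $v\in V(T)$.
   Context: A convex body is a closed, bounded, non-empty convex subset of $\mathbb{R}^n$; $\mathcal{K}_n$ is the set of convex bodies in $\mathbb{R}^n$ with Minkowski addition and nonnegative scaling. The support function of $A$ is $h_A(x)=\sup\{a\cdot x: a\in A\}$; $\mathcal{H}=\{h_A: A\in\mathcal{K}_n\}$ and $\mathrm{span}(\mathcal{H})$ is its linear span among real functions on $\mathbb{R}^n$. Given an inner product on $\mathrm{span}(\mathcal{H})$, $d(A,B)=\langle h_A-h_B,h_A-h_B\rangle^{1/2}$. An extension of $\chi:L(T)\to\mathcal{K}_n$ is a map $\widehat{\chi}:V(T)\to\mathcal{K}_n$ with $\widehat{\chi}(x)=\chi(x)$ for all $x\in L(T)$; its length is $\ell(\widehat{\chi})=\sum_{\{x,y\}\in E(T)}d(\widehat{\chi}(x),\widehat{\chi}(y))^2$. *)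

(* Defs.v *)
From HB Require Import structures.
From mathcomp Require Import all_boot all_order all_algebra.
From mathcomp Require Import all_classical all_reals all_analysis.
Set Implicit Arguments. Unset Strict Implicit. Unset Printing Implicit Defensive.
Import Order.TTheory GRing.Theory Num.Theory.
Import numFieldNormedType.Exports.
Local Open Scope classical_set_scope.
Local Open Scope ring_scope.

Definition simple_graph (V : finType) (e : rel V) : Prop :=
  symmetric e /\ irreflexive e.

Definition degree (V : finType) (e : rel V) (v : V) : nat := #|[pred w | e v w]|.

Definition is_tree (V : finType) (e : rel V) : Prop :=
  simple_graph e /\
  (forall x y : V, connect e x y) /\
  (forall c : seq V, uniq c -> (3 <= size c)%N -> ~~ cycle e c).

Definition degrees_1_or_3 (V : finType) (e : rel V) : Prop :=
  forall v : V, degree e v = 1%N \/ degree e v = 3%N.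

Definition is_leaf (V : finType) (e : rel V) (v : V) : bool := degree e v == 1%N.

Definition convex_body (R : realType) (n : nat) (A : set 'rV[R]_n) : Prop :=
  closed A /\ bounded_set A /\ A !=set0 /\
  convex_set (A : set (convex_lmodType 'rV[R]_n)).

Definition dotp (R : realType) (n : nat) (a x : 'rV[R]_n) : R :=
  \sum_(i < n) a 0 i * x 0 i.

Definition support_fun (R : realType) (n : nat) (A : set 'rV[R]_n)
  : 'rV[R]_n -> R :=
  fun x => sup [set dotp a x | a in A].

Definition in_spanH (R : realType) (n : nat) (f : 'rV[R]_n -> R) : Prop :=
  exists (k : nat) (c : 'I_k -> R) (A : 'I_k -> set 'rV[R]_n),
    (forall i, convex_body (A i)) /\
    f = (fun x => \sum_(i < k) c i * support_fun (A i) x).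

(* an inner product on span(H): a symmetric bilinear positive definite form;
   it is given as a function on all real functions, only its restriction
   to span(H) is constrained *)
Definition inner_product_on_spanH (R : realType) (n : nat)
  (ip : ('rV[R]_n -> R) -> ('rV[R]_n -> R) -> R) : Prop :=
  (forall f g, in_spanH f -> in_spanH g -> ip f g = ip g f) /\
  (forall (a : R) f g k, in_spanH f -> in_spanH g -> in_spanH k ->
     ip (fun x => a * f x + g x) k = a * ip f k + ip g k) /\
  (forall f, in_spanH f -> f <> (fun _ => 0) -> 0 < ip f f).

Definition dist_ip (R : realType) (n : nat)
  (ip : ('rV[R]_n -> R) -> ('rV[R]_n -> R) -> R) (A B : set 'rV[R]_n) : R :=
  Num.sqrt (ip (fun x => support_fun A x - support_fun B x)
               (fun x => support_fun A x - support_fun B x)).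

Definition mink_add (R : realType) (n : nat) (A B : set 'rV[R]_n) : set 'rV[R]_n :=
  [set a + b | a in A & b in B].
Definition mink_scale (R : realType) (n : nat) (t : R) (A : set 'rV[R]_n)
  : set 'rV[R]_n := [set t *: a | a in A].

Definition is_extension (V : finType) (e : rel V) (R : realType) (n : nat)
  (chi chihat : V -> set 'rV[R]_n) : Prop :=
  (forall v, convex_body (chihat v)) /\
  (forall x, is_leaf e x -> chihat x = chi x).

(* length: sum over the edges {x,y} of E(T) of d(chihat x, chihat y)^2;
   each unordered edge appears twice among the ordered adjacent pairs *)
Definition ext_length (V : finType) (e : rel V) (R : realType) (n : nat)
  (ip : ('rV[R]_n -> R) -> ('rV[R]_n -> R) -> R) (chihat : V -> set 'rV[R]_n) : R :=
  2^-1 * \sum_(x : V) \sum_(y : V | e x y) dist_ip ip (chihat x) (chihat y) ^+ 2.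

(* Main.v *)
Require Import Defs.
From HB Require Import structures.
From mathcomp Require Import all_boot all_order all_algebra.
From mathcomp Require Import all_classical all_reals all_analysis.
From mathcomp Require Import lra.
Import Order.TTheory GRing.Theory Num.Theory.
Import numFieldNormedType.Exports.
Local Open Scope classical_set_scope.
Local Open Scope ring_scope.
Set Implicit Arguments. Unset Strict Implicit. Unset Printing Implicit Defensive.
Section Graph.
Variables (V : finType) (e : rel V).

Lemma connect_ind (P : V -> Prop) :
  (forall x y, e x y -> P x -> P y) -> forall x y, connect e x y -> P x -> P y.
Proof.
move=> He x y /connectP [p pth ->]; elim: p x pth => [//|z p IH] x /= /andP[exz pz] Px.
exact: (IH z pz (He _ _ exz Px)).
Qed.

Lemma exists_leaf : is_tree e -> degrees_1_or_3 e -> forall v : V, exists x, is_leaf e x.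
Proof.
move=> [[esym eirr] [_ noc]] deg v.
apply: contrapT => noleaf.
have d3 : forall x, degree e x = 3%N.
  move=> x; case: (deg x) => // h; exfalso; apply: noleaf; exists x; by rewrite /is_leaf h.
have nb : forall x z, exists y, e x y && (y != z).
  move=> x z; apply: contrapT => hn.
  have : (#|[pred w | e x w]| <= #|pred1 z|)%N.
    apply: subset_leq_card; apply/fintype.subsetP => w; rewrite !inE => exw.
    apply/negPn/negP => wz; apply: hn; exists w; by rewrite exw.
  by rewrite card1 -/(degree e x) d3.
have Hind : forall k, exists x (s : seq V), [/\ size s = k, path e x s & uniq (x :: s)].
  elim=> [|k [x [s [sz ps us]]]]; first by exists v, [::].
  have [y /andP [exy yz]] := nb x (head x s).
  have yx : y != x by apply/negP => /eqP yx; move: exy; rewrite yx eirr.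
  case: (boolP (y \in x :: s)) => ys.
    exfalso; move: ys; rewrite inE (negbTE yx) /= => ys.
    case/splitPr: ys ps us yz sz => p1 p2 ps us yz sz.
    case: p1 ps us yz sz => [|z p1] ps us yz sz; first by rewrite /= eqxx in yz.
    have := noc (x :: rcons (z :: p1) y).
    have U : uniq (x :: rcons (z :: p1) y).
      by move: us; rewrite -cat_rcons -cat_cons cat_uniq => /andP[].
    move=> /(_ U); rewrite /= size_rcons => /(_ isT); apply/negP/negPn.
    rewrite /cycle rcons_path last_rcons (esym y x) exy andbT.
    by move: ps; rewrite -cat_rcons cat_path => /andP[h _]; exact: h.
  exists y, (x :: s); split.
  - by rewrite /= sz.
  - by rewrite /= (esym y x) exy ps.
  - by rewrite cons_uniq ys us.
have [x [s [sz _ us]]] := Hind #|V|.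
have := card_uniqP us; move=> h.
have := max_card (mem (x :: s)); rewrite h /= sz ltnn //.
Qed.
End Graph.
Section Harm.
Variables (V : finType) (e : rel V) (R : realType).
Hypothesis esym : symmetric e.

Lemma sum_sym (F : V -> V -> R) :
  \sum_x \sum_(y | e x y) F x y = \sum_x \sum_(y | e x y) F y x.
Proof.
rewrite (eq_bigr (fun x => \sum_y (if e x y then F x y else 0))); last first.
  by move=> x _; rewrite big_mkcond.
rewrite exchange_big /=; apply: eq_bigr => x _; rewrite [RHS]big_mkcond /=.
by apply: eq_bigr => y _; rewrite esym.
Qed.

Lemma energy (f : V -> R) :
  \sum_x \sum_(y | e x y) (f x - f y) ^+ 2 =
  2 * \sum_x f x * \sum_(y | e x y) (f x - f y).
Proof.
have h1 : \sum_x \sum_(y | e x y) (f x - f y) ^+ 2 =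
   \sum_x \sum_(y | e x y) (f x - f y) * f x -
   \sum_x \sum_(y | e x y) (f x - f y) * f y.
  rewrite -sumrB; apply: eq_bigr => x _; rewrite -sumrB; apply: eq_bigr => y _.
  by rewrite -mulrBr expr2.
rewrite h1 (sum_sym (fun x y => (f x - f y) * f y)) /=.
have h2 : \sum_x \sum_(y | e x y) (f y - f x) * f x =
     - \sum_x \sum_(y | e x y) (f x - f y) * f x.
  rewrite -sumrN; apply: eq_bigr => x _; rewrite -sumrN; apply: eq_bigr => y _.
  by rewrite -mulNr opprB.
rewrite h2 opprK mulr2n mulrDl mul1r; congr (_ + _);
  by apply: eq_bigr => x _; rewrite mulr_sumr; apply: eq_bigr => y _; rewrite mulrC.
Qed.

Definition Mop (f : V -> R) (v : V) : R :=
  if is_leaf e v then f v else \sum_(w | e v w) (f v - f w).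

Hypothesis tree : is_tree e.
Hypothesis deg13 : degrees_1_or_3 e.

Lemma edge_const (f : V -> R) :
  (forall x y, e x y -> f x = f y) -> forall v, exists2 l, is_leaf e l & f v = f l.
Proof.
move=> H v; have [l hl] := exists_leaf tree deg13 v; exists l => //.
have [_ [conn _]] := tree.
apply: (@connect_ind _ e (fun y => f y = f l)) (conn l v) _ => // x y exy <-.
by rewrite (H _ _ exy).
Qed.

Lemma Mop_inj (f : V -> R) : (forall v, Mop f v = 0) -> forall v, f v = 0.
Proof.
move=> H.
have E : \sum_x \sum_(y | e x y) (f x - f y) ^+ 2 = 0.
  rewrite energy big1 ?mulr0 // => x _.
  have := H x; rewrite /Mop; case: ifP => _ ->; by rewrite ?mul0r ?mulr0.
have E2 : forall x y, e x y -> f x = f y.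
  move=> x y exy.
  have HH : forall i : V, true -> 0 <= \sum_(y | e i y) (f i - f y) ^+ 2.
    by move=> i _; apply: sumr_ge0 => ? _; apply: sqr_ge0.
  have E3 := psumr_eq0P HH E.
  have := psumr_eq0P _ (E3 x isT) => /(_ (fun _ _ => sqr_ge0 _)) /(_ y exy).
  by move/eqP; rewrite sqrf_eq0 subr_eq0 => /eqP.
move=> v; have [l hl ->] := edge_const E2 v.
by have := H l; rewrite /Mop hl.
Qed.
End Harm.
Section Harm2.
Variables (V : finType) (e : rel V) (R : realType).
Hypothesis tree : is_tree e.
Hypothesis deg13 : degrees_1_or_3 e.

Let esym : symmetric e. Proof. by case: tree => [[]]. Qed.

Definition acoef (w v : V) : R :=
  if is_leaf e v then (w == v)%:R
  else (w == v)%:R * (degree e v)%:R - (e v w)%:R.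

Definition Amx : 'M[R]_#|V| := \matrix_(i, j) acoef (enum_val i) (enum_val j).

Definition rowf (u : 'rV[R]_#|V|) : V -> R := fun v => u 0 (enum_rank v).

Lemma sum_acoef (f : V -> R) v : \sum_w f w * acoef w v = Mop e f v.
Proof.
rewrite /acoef /Mop; case: ifP => _.
  rewrite (bigD1 v) //= eqxx mulr1 big1 ?addr0 // => w /negbTE ->; by rewrite mulr0.
rewrite (eq_bigr (fun w => f w * (w == v)%:R * (degree e v)%:R - (if e v w then f w else 0))); last first.
  by move=> w _; rewrite mulrBr mulrA; case: (e v w); rewrite ?mulr1 ?mulr0.
rewrite sumrB -big_mkcond /= -mulr_suml.
rewrite (bigD1 v) //= eqxx mulr1 big1 ?addr0; last by move=> w /negbTE ->; rewrite mulr0.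
rewrite sumrB; congr (_ - _).
by rewrite sumr_const /degree mulr_natr.
Qed.

Lemma mulAmx (u : 'rV[R]_#|V|) j : (u *m Amx) 0 j = Mop e (rowf u) (enum_val j).
Proof.
rewrite mxE -sum_acoef (reindex (@enum_rank V)) /=; last first.
  by apply: onW_bij; apply: enum_rank_bij.
apply: eq_bigr => w _; by rewrite mxE enum_rankK.
Qed.

Lemma Amx_unit : Amx \in unitmx.
Proof.
rewrite -row_free_unit -kermx_eq0; apply/eqP/row_matrixP => i.
rewrite row0; set r := row i (kermx Amx).
have r0 : r *m Amx = 0 by rewrite /r -row_mul mulmx_ker row0.
have Hf : forall v, Mop e (rowf r) v = 0.
  move=> v; rewrite -(enum_rankK v) -mulAmx r0 mxE //.
have := Mop_inj esym tree deg13 Hf => Z.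
apply/rowP => j; have := Z (enum_val j); rewrite /rowf enum_valK => ->.
by rewrite mxE.
Qed.

Lemma Mop_surj (b : V -> R) : exists f, forall v, Mop e f v = b v.
Proof.
have full : row_full Amx by rewrite row_full_unit Amx_unit.
have /submxP [D HD] := submx_full (\row_i b (enum_val i)) full.
exists (rowf D) => v; rewrite -(enum_rankK v) -mulAmx -HD mxE //.
Qed.

Lemma Mop_nonneg (f : V -> R) :
  (forall v, is_leaf e v -> 0 <= f v) ->
  (forall v, ~~ is_leaf e v -> \sum_(w | e v w) (f v - f w) = 0) ->
  forall v, 0 <= f v.
Proof.
move=> Hl Hh v.
case: (@arg_minP _ _ _ v predT f isT) => v0 _ Hmin.
case: (lerP 0 (f v0)) => [h|neg]; first by apply: le_trans h (Hmin v isT).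
exfalso.
have prop : forall x y, e x y -> f x = f v0 -> f y = f v0.
  move=> x y exy fx.
  case: (boolP (is_leaf e x)) => lx.
    by have := Hl x lx; rewrite fx leNgt neg.
  have := Hh x lx; move=> /eqP; rewrite -oppr_eq0 -sumrN => /eqP S.
  have P0 : forall w, e x w -> 0 <= - (f x - f w).
    by move=> w _; rewrite opprB subr_ge0 fx Hmin.
  have := psumr_eq0P P0 S exy; move/eqP; rewrite oppr_eq0 subr_eq0 => /eqP.
  by move=> <-.
have [l hl] := exists_leaf tree deg13 v0.
have [_ [conn _]] := tree.
have := @connect_ind _ e (fun y => f y = f v0) prop _ _ (conn v0 l) erefl.
by move=> fl; have := Hl l hl; rewrite fl leNgt neg.
Qed.

Lemma lambda_exists : exists lam : V -> V -> R,
  [/\ (forall v x, 0 <= lam v x),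
      (forall y x, is_leaf e y -> lam y x = (if is_leaf e x then (y == x)%:R else 0)) &
      (forall v x, ~~ is_leaf e v -> \sum_(w | e v w) (lam v x - lam w x) = 0)].
Proof.
pose b x := fun v : V => if is_leaf e v then (v == x)%:R else 0 : R.
have [F HF] := choice (fun x => Mop_surj (b x)).
exists (fun v x => if is_leaf e x then F x v else 0); split.
- move=> v x; case: ifP => // lx; apply: Mop_nonneg => [w lw|w lw].
    by have := HF x w; rewrite /Mop /b lw => ->; rewrite ler0n.
  by have := HF x w; rewrite /Mop /b (negbTE lw).
- move=> y x ly; case: ifP => // _; by have := HF x y; rewrite /Mop /b ly.
- move=> v x lv; case: ifP => _; last by rewrite big1 // subrr.
  by have := HF x v; rewrite /Mop /b (negbTE lv).
Qed.
End Harm2.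
Section Convex.
Variables (R : realType) (n : nat).
Local Notation vec := 'rV[R]_n.

Lemma dotpC (a b : vec) : dotp a b = dotp b a.
Proof. by apply: eq_bigr => i _; rewrite mulrC. Qed.
Lemma dotpDl (a b c : vec) : dotp (a + b) c = dotp a c + dotp b c.
Proof. by rewrite /dotp -big_split; apply: eq_bigr => i _; rewrite mxE mulrDl. Qed.
Lemma dotpZl t (a c : vec) : dotp (t *: a) c = t * dotp a c.
Proof. by rewrite /dotp mulr_sumr; apply: eq_bigr => i _; rewrite mxE mulrA. Qed.
Lemma dotpNl (a c : vec) : dotp (- a) c = - dotp a c.
Proof. by rewrite -scaleN1r dotpZl mulN1r. Qed.
Lemma dotpBl (a b c : vec) : dotp (a - b) c = dotp a c - dotp b c.
Proof. by rewrite dotpDl dotpNl. Qed.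
Lemma dotp0l (c : vec) : dotp 0 c = 0.
Proof. by rewrite /dotp big1 // => i _; rewrite mxE mul0r. Qed.
Lemma dotpBr (a b c : vec) : dotp c (a - b) = dotp c a - dotp c b.
Proof. by rewrite dotpC dotpBl !(dotpC c). Qed.
Lemma dotpZr t (a c : vec) : dotp c (t *: a) = t * dotp c a.
Proof. by rewrite dotpC dotpZl dotpC. Qed.
Lemma dotp_ge0 (a : vec) : 0 <= dotp a a.
Proof. by apply: sumr_ge0 => i _; rewrite -expr2 sqr_ge0. Qed.
Lemma dotp_gt0 (a : vec) : a != 0 -> 0 < dotp a a.
Proof.
move=> a0; rewrite lt_neqAle dotp_ge0 andbT eq_sym; apply/negP => /eqP H.
move/negP: a0; apply; apply/eqP/rowP => j.
have : a 0 j * a 0 j = 0.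
  apply: (psumr_eq0P _ H) => // i _; by rewrite -expr2 sqr_ge0.
move/eqP; rewrite mulf_eq0 orbb => /eqP ->; by rewrite mxE.
Qed.

Lemma cont_sum (T : topologicalType) (I : Type) (s : seq I) (P : pred I) (F : I -> T -> R) :
  (forall i, continuous (F i)) -> continuous (fun a => \sum_(i <- s | P i) F i a).
Proof.
move=> HF; elim: s => [|i s IH].
  rewrite (_ : (fun a => _) = fun _ => 0); first exact: cst_continuous.
  by apply: funext => a; rewrite big_nil.
case: (boolP (P i)) => Pi.
  rewrite (_ : (fun a => _) = F i + (fun a => \sum_(i <- s | P i) F i a)).
    by move=> a; apply: continuousD; [exact: HF | exact: IH].
  by apply: funext => a; rewrite big_cons Pi.
rewrite (_ : (fun a => _) = (fun a => \sum_(i <- s | P i) F i a)) //.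
by apply: funext => a; rewrite big_cons (negbTE Pi).
Qed.

Lemma dotp_cont (x : vec) : continuous (fun a : vec => dotp a x).
Proof.
apply: cont_sum => i a; apply: continuousM; first exact: coord_continuous.
exact: cst_continuous.
Qed.

Lemma dotp_cont2 (p : vec) : continuous (fun a : vec => dotp (p - a) (p - a)).
Proof.
apply: cont_sum => i a; apply: continuousM.
  apply: (@continuous_comp _ _ _ (fun a : vec => p - a) (fun M : vec => M 0 i)).
    by apply: continuousB; [exact: cst_continuous | done].
  exact: coord_continuous.
apply: (@continuous_comp _ _ _ (fun a : vec => p - a) (fun M : vec => M 0 i)).
  by apply: continuousB; [exact: cst_continuous | done].
exact: coord_continuous.
Qed.
End Convex.
Section Convex2.
Variables (R : realType) (n : nat).
Local Notation vec := 'rV[R]_n.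
Local Open Scope convex_scope.

Lemma convexP (A : set vec) :
  convex_set (A : set (convex_lmodType vec)) <->
  (forall x y (t : R), A x -> A y -> 0 <= t -> t <= 1 -> A (t *: x + (1 - t) *: y)).
Proof.
split.
  move=> cA x y t Ax Ay t0 t1.
  have := cA x y (Itv01 t0 t1); rewrite !inE => /(_ Ax Ay); exact.
move=> H x y l; rewrite !inE => Ax Ay; by apply: H.
Qed.

Lemma cb_compact (A : set vec) : convex_body A -> compact A.
Proof. by move=> [cA [bA _]]; apply: bounded_closed_compact. Qed.

Lemma cb_ne (A : set vec) : convex_body A -> A !=set0.
Proof. by move=> [_ [_ [h _]]]. Qed.

Lemma cb_cvx (A : set vec) : convex_body A ->
  (forall x y (t : R), A x -> A y -> 0 <= t -> t <= 1 -> A (t *: x + (1 - t) *: y)).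
Proof. by move=> [_ [_ [_ h]]]; apply/convexP. Qed.

Lemma cb_of (A : set vec) : compact A -> A !=set0 ->
  (forall x y (t : R), A x -> A y -> 0 <= t -> t <= 1 -> A (t *: x + (1 - t) *: y)) ->
  convex_body A.
Proof.
move=> cA nA cvA; split; first exact: compact_closed (@norm_hausdorff _ _) cA.
split; first exact: compact_bounded.
by split => //; apply/convexP.
Qed.

Lemma cb_add (A B : set vec) : convex_body A -> convex_body B -> convex_body (mink_add A B).
Proof.
move=> hA hB; apply: cb_of.
- have -> : mink_add A B = (fun z : vec * vec => z.1 + z.2) @` (A `*` B).
    apply/seteqP; split.
      by move=> _ [a Aa [b Bb <-]]; exists (a, b).
    by move=> _ [[a b] [/= Aa Bb] <-]; exists a => //; exists b.
  apply: continuous_compact; first exact: continuous_subspaceT add_continuous.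
  exact: compact_setX (cb_compact hA) (cb_compact hB).
- have [a Aa] := cb_ne hA; have [b Bb] := cb_ne hB.
  by exists (a + b); exists a => //; exists b.
- move=> _ _ t [a1 Aa1 [b1 Bb1 <-]] [a2 Aa2 [b2 Bb2 <-]] t0 t1.
  exists (t *: a1 + (1 - t) *: a2); first exact: cb_cvx.
  exists (t *: b1 + (1 - t) *: b2); first exact: cb_cvx.
  by rewrite !scalerDr addrACA.
Qed.

Lemma cb_scale (A : set vec) t : convex_body A -> convex_body (mink_scale t A).
Proof.
move=> hA; apply: cb_of.
- apply: continuous_compact; last exact: cb_compact hA.
  apply: continuous_subspaceT => a; exact: (@scaler_continuous R vec t a).
- by have [a Aa] := cb_ne hA; exists (t *: a); exists a.
- move=> _ _ s [a1 Aa1 <-] [a2 Aa2 <-] s0 s1.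
  exists (s *: a1 + (1 - s) *: a2); first exact: cb_cvx.
  by rewrite scalerDr !scalerA mulrC (mulrC t).
Qed.

Lemma cb_0 : convex_body [set (0 : vec)].
Proof.
apply: cb_of; first exact: compact_set1.
  by exists 0.
by move=> x y t -> -> _ _; rewrite !scaler0 addr0.
Qed.

Lemma supp_hassup (A : set vec) x : convex_body A -> has_sup [set dotp a x | a in A].
Proof.
move=> hA; apply: compact_has_sup.
  by have [a Aa] := cb_ne hA; exists (dotp a x); exists a.
apply: continuous_compact; last exact: cb_compact.
apply: continuous_subspaceT; exact: dotp_cont.
Qed.

Lemma supp_add (A B : set vec) x : convex_body A -> convex_body B ->
  support_fun (mink_add A B) x = support_fun A x + support_fun B x.
Proof.
move=> hA hB; rewrite /support_fun -sup_sumE; [congr sup|exact: supp_hassup|exact: supp_hassup].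
apply/seteqP; split.
  move=> _ [_ [a Aa [b Bb <-]] <-]; exists (dotp a x); first by exists a.
  by exists (dotp b x); [exists b | rewrite dotpDl].
move=> _ [_ [a Aa <-] [_ [b Bb <-] <-]]; exists (a + b); last by rewrite dotpDl.
by exists a => //; exists b.
Qed.

Lemma sup_scale (S : set R) t : 0 <= t -> has_sup S ->
  sup [set t * s | s in S] = t * sup S.
Proof.
move=> t0 [[s0 Ss0] [M ubM]].
have ne : [set t * s | s in S] !=set0 by exists (t * s0); exists s0.
have hub : has_ubound S by exists M.
rewrite le_eqVlt in t0; case/orP: t0 => [/eqP <-|tp].
  rewrite mul0r (_ : [set _ | s in S] = [set 0]) ?sup1 //.
  apply/seteqP; split; first by move=> _ [s _ <-]; rewrite mul0r.
  by move=> _ ->; exists s0 => //; rewrite mul0r.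
have hub2 : has_ubound [set t * s | s in S].
  by exists (t * M) => _ [s Ss <-]; rewrite ler_wpM2l ?(ltW tp) //; exact: ubM.
apply/eqP; rewrite eq_le; apply/andP; split.
  apply: ge_sup => // _ [s Ss <-]; rewrite ler_wpM2l ?(ltW tp) //.
  exact: ub_le_sup.
rewrite -ler_pdivlMl //; apply: ge_sup; first by exists s0.
move=> s Ss; rewrite ler_pdivlMl //; apply: ub_le_sup => //.
by exists s.
Qed.

Lemma supp_scale (A : set vec) t x : convex_body A -> 0 <= t ->
  support_fun (mink_scale t A) x = t * support_fun A x.
Proof.
move=> hA t0; rewrite /support_fun -sup_scale //; last exact: supp_hassup.
congr sup.
apply/seteqP; split.
  by move=> _ [_ [a Aa <-] <-]; exists (dotp a x); [exists a | rewrite dotpZl].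
by move=> _ [_ [a Aa <-] <-]; exists (t *: a); [exists a | rewrite dotpZl].
Qed.

Lemma supp0 x : support_fun [set (0 : vec)] x = 0.
Proof.
rewrite /support_fun (_ : [set _ | a in _] = [set 0]) ?sup1 //.
apply/seteqP; split; first by move=> _ [a -> <-]; rewrite dotp0l.
by move=> _ ->; exists 0 => //; rewrite dotp0l.
Qed.

Lemma supp_sub (A B : set vec) : convex_body A -> convex_body B ->
  (forall x, support_fun A x = support_fun B x) -> B `<=` A.
Proof.
move=> hA hB E p Bp; apply: contrapT => nAp.
have [a0 a0A Hmin] := @EVT_min_rV R n (fun a => dotp (p - a) (p - a)) A (cb_ne hA)
   (cb_compact hA) (continuous_subspaceT (@dotp_cont2 R n p)).
move: a0A; rewrite inE => a0A.
set q := p - a0.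
have q0 : q != 0.
  apply/negP; rewrite /q subr_eq0 => /eqP pa; by apply: nAp; rewrite pa.
have claim : forall a, A a -> dotp a q <= dotp a0 q.
  move=> a Aa; rewrite leNgt; apply/negP; rewrite -subr_gt0 -dotpBl => cpos.
  set d := a - a0; set c := dotp d q; set D := dotp d d.
  have D0 : 0 <= D by apply: dotp_ge0.
  set s := c / (c + D).
  have cD : 0 < c + D by apply: ltr_wpDr.
  have s0 : 0 < s by apply: divr_gt0.
  have s1 : s <= 1 by rewrite ler_pdivrMr // mul1r lerDl.
  have sE : s * (c + D) = c by rewrite /s mulfVK // gt_eqF.
  have As : A (s *: a + (1 - s) *: a0) by apply: cb_cvx => //; apply: ltW.
  have := Hmin _ (mem_set As).
  have -> : p - (s *: a + (1 - s) *: a0) = q - s *: d.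
    rewrite scalerBl scale1r scalerBr /q /d !opprD !opprK !addrA.
    by congr (_ + _); rewrite addrAC.
  rewrite -/q (dotpBl q (s *: d)) !dotpBr !dotpZl !dotpZr (dotpC q d) -/c -/D.
  have cq : s * dotp d p - s * dotp d a0 = s * c by rewrite -mulrBr /c /q dotpBr.
  have c0 : 0 < c by [].
  move=> H; nra.
have ub : ubound [set dotp a q | a in A] (dotp a0 q) by move=> _ [a Aa <-]; apply: claim.
have h1 : support_fun A q <= dotp a0 q.
  apply: ge_sup => //; by have [a Aa] := cb_ne hA; exists (dotp a q); exists a.
have h2 : dotp p q <= support_fun B q.
  apply: ub_le_sup; first by case: (supp_hassup q hB).
  by exists p.
have h3 : dotp a0 q < dotp p q.
  by rewrite -subr_gt0 -dotpBl dotp_gt0.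
by move: (E q) h1 h2 h3 => ->; move=> h1 h2 h3; have := lt_le_trans h3 h2; rewrite ltNge h1.
Qed.

Lemma supp_inj (A B : set vec) : convex_body A -> convex_body B ->
  (forall x, support_fun A x = support_fun B x) -> A = B.
Proof.
move=> hA hB E; apply/seteqP; split; first by apply: supp_sub => // x.
exact: supp_sub.
Qed.
End Convex2.
Section IP.
Variables (R : realType) (n : nat).
Local Notation vec := 'rV[R]_n.
Local Notation S := (@in_spanH R n).

Lemma span0 : S (fun _ => 0).
Proof.
exists 0%N, (fun _ => 0), (fun _ => set0); split; first by case.
by apply: funext => x; rewrite big_ord0.
Qed.

Lemma span_supp (A : set vec) : convex_body A -> S (support_fun A).
Proof.
move=> hA; exists 1%N, (fun _ => 1), (fun _ => A); split => //.
by apply: funext => x; rewrite big_ord1 mul1r.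
Qed.

Lemma spanD f g : S f -> S g -> S (fun x => f x + g x).
Proof.
move=> [k1 [c1 [A1 [h1 ->]]]] [k2 [c2 [A2 [h2 ->]]]].
exists (k1 + k2)%N, (fun i => match fintype.split i with inl j => c1 j | inr j => c2 j end),
  (fun i => match fintype.split i with inl j => A1 j | inr j => A2 j end); split.
  by move=> i; case: (fintype.split i).
apply: funext => x; rewrite big_split_ord /=; congr (_ + _); apply: eq_bigr => j _.
  by rewrite (unsplitK (inl _ j)).
by rewrite (unsplitK (inr _ j)).
Qed.

Lemma spanZ a f : S f -> S (fun x => a * f x).
Proof.
move=> [k [c [A [h ->]]]]; exists k, (fun i => a * c i), A; split => //.
by apply: funext => x; rewrite mulr_sumr; apply: eq_bigr => i _; rewrite mulrA.
Qed.

Lemma spanB f g : S f -> S g -> S (fun x => f x - g x).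
Proof.
move=> hf hg.
have -> : (fun x => f x - g x) = (fun x => f x + -1 * g x).
  by apply: funext => x; rewrite mulN1r.
exact: spanD hf (spanZ (-1) hg).
Qed.

Lemma span_sum (I : Type) (s : seq I) (P : pred I) (F : I -> vec -> R) :
  (forall i, S (F i)) -> S (fun x => \sum_(i <- s | P i) F i x).
Proof.
move=> HF; elim: s => [|i s IH].
  have -> : (fun x => \sum_(i <- [::] | P i) F i x) = fun _ => 0.
    by apply: funext => x; rewrite big_nil.
  exact: span0.
case: (boolP (P i)) => Pi.
  rewrite (_ : (fun x => _) = (fun x => F i x + \sum_(i <- s | P i) F i x)).
    exact: spanD.
  by apply: funext => x; rewrite big_cons Pi.
by rewrite (_ : (fun x => _) = (fun x => \sum_(i <- s | P i) F i x)) //;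
  apply: funext => x; rewrite big_cons (negbTE Pi).
Qed.

Variable ip : (vec -> R) -> (vec -> R) -> R.
Hypothesis Hip : inner_product_on_spanH ip.

Lemma ipC f g : S f -> S g -> ip f g = ip g f.
Proof. by case: Hip => h _; apply: h. Qed.

Lemma ip_lin a f g k : S f -> S g -> S k ->
  ip (fun x => a * f x + g x) k = a * ip f k + ip g k.
Proof. by case: Hip => _ [h _]; apply: h. Qed.

Lemma ip0l k : S k -> ip (fun _ => 0) k = 0.
Proof.
move=> hk; have := ip_lin 1 span0 span0 hk.
rewrite (_ : (fun x : vec => 1 * 0 + 0) = fun _ => 0); last first.
  by apply: funext => x; rewrite mulr0 addr0.
rewrite mul1r => h; lra.
Qed.

Lemma ip0r k : S k -> ip k (fun _ => 0) = 0.
Proof. by move=> hk; rewrite ipC ?ip0l //; exact: span0. Qed.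

Lemma ipDl f g k : S f -> S g -> S k ->
  ip (fun x => f x + g x) k = ip f k + ip g k.
Proof.
move=> hf hg hk; have := ip_lin 1 hf hg hk; rewrite mul1r => <-.
by congr ip; apply: funext => x; rewrite mul1r.
Qed.

Lemma ipZl a f k : S f -> S k -> ip (fun x => a * f x) k = a * ip f k.
Proof.
move=> hf hk; have := ip_lin a hf span0 hk; rewrite ip0l // addr0 => <-.
by congr ip; apply: funext => x; rewrite addr0.
Qed.

Lemma ipBl f g k : S f -> S g -> S k ->
  ip (fun x => f x - g x) k = ip f k - ip g k.
Proof.
move=> hf hg hk; have := ipDl hf (spanZ (-1) hg) hk; rewrite ipZl // mulN1r => <-.
by congr ip; apply: funext => x; rewrite mulN1r.
Qed.

Lemma ipBr f g k : S f -> S g -> S k ->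
  ip k (fun x => f x - g x) = ip k f - ip k g.
Proof.
by move=> hf hg hk; rewrite ipC ?ipBl ?(ipC hf) ?(ipC hg) //; apply: spanB.
Qed.

Lemma ipNl f k : S f -> S k -> ip (fun x => - f x) k = - ip f k.
Proof.
move=> hf hk; have := ipZl (-1) hf hk; rewrite mulN1r => <-.
by congr ip; apply: funext => x; rewrite mulN1r.
Qed.

Lemma ip_suml (I : Type) (s : seq I) (P : pred I) (F : I -> vec -> R) k :
  (forall i, S (F i)) -> S k ->
  ip (fun x => \sum_(i <- s | P i) F i x) k = \sum_(i <- s | P i) ip (F i) k.
Proof.
move=> HF hk; elim: s => [|i s IH].
  rewrite big_nil; have -> : (fun x => \sum_(i <- [::] | P i) F i x) = fun _ => 0.
    by apply: funext => x; rewrite big_nil.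
  exact: ip0l.
rewrite big_cons; case: (boolP (P i)) => Pi.
  rewrite -IH -ipDl //; last exact: span_sum.
  by congr ip; apply: funext => x; rewrite big_cons Pi.
by rewrite -IH; congr ip; apply: funext => x; rewrite big_cons (negbTE Pi).
Qed.

Lemma ip_ge0 f : S f -> 0 <= ip f f.
Proof.
move=> hf; case: (pselect (f = fun _ => 0)) => [->|nf]; first by rewrite ip0l //; exact: span0.
by apply: ltW; case: Hip => _ [_ h]; apply: h.
Qed.

Lemma ip_eq0 f : S f -> ip f f = 0 -> f = fun _ => 0.
Proof.
move=> hf h0; apply: contrapT => nf.
by case: Hip => _ [_ h]; have := h f hf nf; rewrite h0 ltxx.
Qed.

Lemma ipQD f g : S f -> S g ->
  ip (fun x => f x + g x) (fun x => f x + g x) = ip f f + 2 * ip f g + ip g g.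
Proof.
move=> hf hg; have hfg := spanD hf hg.
rewrite ipDl // (ipC hf hfg) (ipC hg hfg) !ipDl // (ipC hg hf).
lra.
Qed.

Lemma dist2 (A B : set vec) : convex_body A -> convex_body B ->
  dist_ip ip A B ^+ 2 =
  ip (fun x => support_fun A x - support_fun B x) (fun x => support_fun A x - support_fun B x).
Proof.
move=> hA hB; rewrite /dist_ip sqr_sqrtr //; apply: ip_ge0; apply: spanB; exact: span_supp.
Qed.
End IP.
Lemma comb (V : Type) (R : realType) (n : nat) (r : seq V) (P : pred V) (mu : V -> R)
  (C : V -> set 'rV[R]_n) :
  (forall x, P x -> 0 <= mu x) -> (forall x, P x -> convex_body (C x)) ->
  convex_body (\big[@mink_add R n/[set 0]]_(x <- r | P x) mink_scale (mu x) (C x)) /\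
  forall z, support_fun (\big[@mink_add R n/[set 0]]_(x <- r | P x) mink_scale (mu x) (C x)) z
            = \sum_(x <- r | P x) mu x * support_fun (C x) z.
Proof.
move=> Hmu HC; elim: r => [|x r [IH1 IH2]].
  rewrite big_nil; split; [exact: cb_0 | move=> z; rewrite big_nil; exact: supp0].
split.
  rewrite big_cons; case: ifP => Px //.
  by apply: cb_add => //; apply: cb_scale; apply: HC.
move=> z; rewrite big_cons; case: ifP => Px; rewrite big_cons Px //.
rewrite supp_add //; last by apply: cb_scale; apply: HC.
by rewrite supp_scale ?IH2 //; [apply: HC | apply: Hmu].
Qed.

Theorem theorem2 (V : finType) (e : rel V) (R : realType) :
  is_tree e -> degrees_1_or_3 e ->
  exists lambda : V -> V -> R,
    (forall v x, is_leaf e x -> 0 <= lambda v x) /\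
    (forall x, is_leaf e x -> lambda x x = 1) /\
    forall (n : nat) (ip : ('rV[R]_n -> R) -> ('rV[R]_n -> R) -> R)
           (chi : V -> set 'rV[R]_n),
      inner_product_on_spanH ip ->
      (forall x, is_leaf e x -> convex_body (chi x)) ->
      exists chihat0 : V -> set 'rV[R]_n,
        [/\ is_extension e chi chihat0,
            (forall chihat, is_extension e chi chihat ->
               ext_length e ip chihat0 <= ext_length e ip chihat),
            (forall chihat, is_extension e chi chihat ->
               ext_length e ip chihat <= ext_length e ip chihat0 ->
               chihat = chihat0) &
            (forall v, chihat0 v =
               \big[@mink_add R n/[set 0]]_(x | is_leaf e x)
                  mink_scale (lambda v x) (chi x))].
Proof.
move=> tree deg13.
have esym : symmetric e by case: tree => [[]].
have [lam [lam0 lamL lamH]] := @lambda_exists V e R tree deg13.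
exists lam; split; first by move=> v x _; apply: lam0.
split; first by move=> x lx; rewrite lamL // lx eqxx.
move=> n ip chi Hip Hchi.
pose c0 v := \big[@mink_add R n/[set 0]]_(x | is_leaf e x) mink_scale (lam v x) (chi x).
have Hc0 : forall v, convex_body (c0 v) /\ forall z, support_fun (c0 v) z =
    \sum_(x | is_leaf e x) lam v x * support_fun (chi x) z.
  by move=> v; apply: comb => x lx; [apply: lam0 | apply: Hchi].
have c0leaf : forall y, is_leaf e y -> c0 y = chi y.
  move=> y ly; apply: supp_inj; [exact: (Hc0 y).1 | exact: Hchi | move=> z].
  rewrite (Hc0 y).2 (bigD1 y) //= big1 ?addr0.
    by rewrite lamL // ly eqxx mul1r.
  by move=> x /andP [lx /negbTE xy]; rewrite lamL // lx eq_sym xy mul0r.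
have ext0 : is_extension e chi c0.
  by split; [move=> v; exact: (Hc0 v).1 | exact: c0leaf].
have key : forall C, is_extension e chi C ->
  ext_length e ip C = ext_length e ip c0 +
    2^-1 * \sum_x \sum_(y | e x y)
      ip (fun z => (support_fun (C x) z - support_fun (c0 x) z) -
                   (support_fun (C y) z - support_fun (c0 y) z))
         (fun z => (support_fun (C x) z - support_fun (c0 x) z) -
                   (support_fun (C y) z - support_fun (c0 y) z)).
  move=> C [HC CL].
  pose g v := support_fun (C v); pose h v := support_fun (c0 v).
  pose D v := fun z => g v z - h v z.
  have Sg : forall v, in_spanH (g v) by move=> v; apply: span_supp.
  have Sh : forall v, in_spanH (h v) by move=> v; apply: span_supp; exact: (Hc0 v).1.
  have SD : forall v, in_spanH (D v) by move=> v; apply: spanB.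
  have Shh : forall x y, in_spanH (fun z => h x z - h y z) by move=> x y; apply: spanB.
  have SDD : forall x y, in_spanH (fun z => D x z - D y z) by move=> x y; apply: spanB.
  have D0 : forall x, is_leaf e x -> D x = fun _ => 0.
    move=> x lx; apply: funext => z; by rewrite /D /g /h CL // c0leaf // subrr.
  have harm : forall x, ~~ is_leaf e x ->
      (fun z => \sum_(y | e x y) (h x z - h y z)) = fun _ => 0.
    move=> x lx; apply: funext => z.
    rewrite (eq_bigr (fun y => \sum_(l | is_leaf e l) (lam x l - lam y l) * support_fun (chi l) z)); last first.
      move=> y _; rewrite /h !(Hc0 _).2 -sumrB; apply: eq_bigr => l _; by rewrite mulrBl.
    rewrite exchange_big /= big1 // => l _; by rewrite -mulr_suml lamH // mul0r.
  have cross : \sum_x \sum_(y | e x y) ip (fun z => h x z - h y z) (fun z => D x z - D y z) = 0.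
    have E1 : forall x y, ip (fun z => h x z - h y z) (fun z => D x z - D y z) =
         ip (fun z => h x z - h y z) (D x) - ip (fun z => h x z - h y z) (D y).
      by move=> x y; rewrite ipBr.
    have E2 : forall x y, ip (fun z => h y z - h x z) (D x) = - ip (fun z => h x z - h y z) (D x).
      move=> x y; rewrite -ipNl //; congr ip; apply: funext => z; by rewrite opprB.
    rewrite (eq_bigr (fun x => \sum_(y | e x y) ip (fun z => h x z - h y z) (D x) -
                               \sum_(y | e x y) ip (fun z => h x z - h y z) (D y))); last first.
      by move=> x _; rewrite -sumrB; apply: eq_bigr => y _; apply: E1.
    rewrite sumrB (sum_sym esym (fun x y => ip (fun z => h x z - h y z) (D y))) /=.
    rewrite [X in _ - X](eq_bigr (fun x => - \sum_(y | e x y) ip (fun z => h x z - h y z) (D x))); last first.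
      by move=> x _; rewrite -sumrN; apply: eq_bigr => y _; apply: E2.
    rewrite sumrN opprK -mulr2n big1 ?mul0rn // => x _.
    rewrite -ip_suml //; case: (boolP (is_leaf e x)) => lx.
      by rewrite D0 // ip0r //; apply: span_sum.
    by rewrite harm // ip0l.
  rewrite /ext_length.
  have E3 : forall x y, e x y -> dist_ip ip (C x) (C y) ^+ 2 =
      dist_ip ip (c0 x) (c0 y) ^+ 2 + 2 * ip (fun z => h x z - h y z) (fun z => D x z - D y z)
      + ip (fun z => D x z - D y z) (fun z => D x z - D y z).
    move=> x y _; rewrite !dist2 //; try exact: (Hc0 _).1.
    have -> : (fun z => support_fun (C x) z - support_fun (C y) z) =
              (fun z => (h x z - h y z) + (D x z - D y z)).
      apply: funext => z; rewrite /D /g /h; lra.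
    by rewrite ipQD.
  rewrite (eq_bigr (fun x => \sum_(y | e x y) (dist_ip ip (c0 x) (c0 y) ^+ 2 +
     2 * ip (fun z => h x z - h y z) (fun z => D x z - D y z) +
     ip (fun z => D x z - D y z) (fun z => D x z - D y z)))); last first.
    by move=> x _; apply: eq_bigr => y exy; apply: E3.
  have E4 : forall x, \sum_(y | e x y) (dist_ip ip (c0 x) (c0 y) ^+ 2 +
     2 * ip (fun z => h x z - h y z) (fun z => D x z - D y z) +
     ip (fun z => D x z - D y z) (fun z => D x z - D y z)) =
     \sum_(y | e x y) dist_ip ip (c0 x) (c0 y) ^+ 2 +
     2 * \sum_(y | e x y) ip (fun z => h x z - h y z) (fun z => D x z - D y z) +
     \sum_(y | e x y) ip (fun z => D x z - D y z) (fun z => D x z - D y z).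
    by move=> x; rewrite !big_split /= mulr_sumr.
  rewrite (eq_bigr _ (fun x _ => E4 x)) !big_split /= -mulr_sumr cross mulr0 addr0.
  by rewrite mulrDr.
exists c0; split => //.
- move=> C HC; rewrite (key C HC) lerDl; apply: mulr_ge0; first by rewrite invr_ge0.
  apply: sumr_ge0 => x _; apply: sumr_ge0 => y _; apply: ip_ge0 => //.
  by apply: spanB; apply: spanB; apply: span_supp; case: HC => // _ _; exact: (Hc0 _).1.
- move=> C HC Hle; have := Hle; rewrite (key C HC) gerDl => Hle2.
  have [HCb CL] := HC.
  have SDD : forall x y, in_spanH (fun z => (support_fun (C x) z - support_fun (c0 x) z) -
                   (support_fun (C y) z - support_fun (c0 y) z)).
    by move=> x y; apply: spanB; apply: spanB; apply: span_supp => //; exact: (Hc0 _).1.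
  have Hge : 0 <= \sum_x \sum_(y | e x y)
      ip (fun z => (support_fun (C x) z - support_fun (c0 x) z) -
                   (support_fun (C y) z - support_fun (c0 y) z))
         (fun z => (support_fun (C x) z - support_fun (c0 x) z) -
                   (support_fun (C y) z - support_fun (c0 y) z)).
    by apply: sumr_ge0 => x _; apply: sumr_ge0 => y _; apply: ip_ge0.
  have Z : \sum_x \sum_(y | e x y)
      ip (fun z => (support_fun (C x) z - support_fun (c0 x) z) -
                   (support_fun (C y) z - support_fun (c0 y) z))
         (fun z => (support_fun (C x) z - support_fun (c0 x) z) -
                   (support_fun (C y) z - support_fun (c0 y) z)) = 0.
    apply/eqP; rewrite eq_le Hge andbT.
    by move: Hle2; rewrite pmulr_rle0 // invr_gt0.
  have Edge : forall x y, e x y -> forall z,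
      support_fun (C x) z - support_fun (c0 x) z = support_fun (C y) z - support_fun (c0 y) z.
    move=> x y exy z.
    have H1 := psumr_eq0P (fun x _ => sumr_ge0 _ (fun y _ => ip_ge0 Hip (SDD x y))) Z.
    have H2 := psumr_eq0P (fun y _ => ip_ge0 Hip (SDD x y)) (H1 x isT) exy.
    have := ip_eq0 Hip (SDD x y) H2 => /(congr1 (fun f => f z)) /= /eqP.
    by rewrite subr_eq0 => /eqP.
  apply: funext => v.
  have [l ll] := exists_leaf tree deg13 v.
  have [_ [conn _]] := tree.
  have P0 : forall z, support_fun (C l) z - support_fun (c0 l) z = 0.
    by move=> z; rewrite CL // c0leaf // subrr.
  have := @connect_ind _ e (fun y => forall z, support_fun (C y) z - support_fun (c0 y) z = 0)
     _ _ _ (conn l v) P0.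
  move=> /(_ _) Hv.
  apply: supp_inj => //; first exact: (Hc0 v).1.
  move=> z; apply/eqP; rewrite -subr_eq0; apply/eqP.
  apply: Hv => x y exy Hx z'; rewrite -(Edge x y exy z'); exact: Hx.
Qed.
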